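(* For $n\ge1$ let \[\alpha_n=\inf\{s\in[-1,0):\ C_{a,R_n}(X)>0,\ C_{a,S_n}(X)>0,\ C_{a,T_n}(X)>0\ \text{for all }X\in(s,0)\}.\] Then $\alpha_{n+1}\le\alpha_n$ for all $n\ge1$. Moreover, $\alpha_{n+1}=\alpha_n$ if and only if one of the following holds: (a) $\alpha_m=-1$ for all $m\ge n$; in this case $C_a(X)>0$ for all $X\in(-1,1)$. (b) $\alpha_m=\alpha_n>-1$ for all $m\ge n$, and $C_{a,R_m}(\alpha_m)=C_{a,S_m}(\alpha_m)=C_{a,T_m}(\alpha_m)=0$ for all $m\ge n$; in this case $C_a(\alpha_n)=0$ and $C_a(X)>0$ for all $X\in(\alpha_n,1)$.
   Context: The Fibonacci substitution is $\sigma(a)=ab$, $\sigma(b)=a$; $w=w_0w_1\ldots=\lim_{m\to\infty}\sigma^m(a)$ is its fixed point starting with $a$, and $C_a(X)=\sum_{n\ge0}1_a(w_n)X^n$ (convergent for $|X|<1$). Let $A_n=\sigma^n(a)$, $B_n=\sigma^n(b)$, $R_n=A_{3n}B_{3n}$, $S_n=A_{3n}A_{3n}$, $T_n=B_{3n}A_{3n}$ (concatenations). For a finite word $u=u_0\cdots u_L$ over $\{a,b\}$, $C_{a,u}(X)=\sum_{i=0}^{L}1_a(u_i)X^i$, a polynomial evaluated at real $X$. *)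

(* Defs.v *)
From Stdlib Require Import Reals List Arith.
From Coquelicot Require Import Coquelicot.
Import ListNotations.
Open Scope R_scope.

Definition letter_a : bool := true.
Definition letter_b : bool := false.

Definition sigma (u : list bool) : list bool :=
  flat_map (fun c : bool => if c then [true; false] else [true]) u.

Definition A (n : nat) : list bool := Nat.iter n sigma [letter_a].
Definition B (n : nat) : list bool := Nat.iter n sigma [letter_b].

Definition Rw (n : nat) : list bool := A (3 * n) ++ B (3 * n).
Definition Sw (n : nat) : list bool := A (3 * n) ++ A (3 * n).
Definition Tw (n : nat) : list bool := B (3 * n) ++ A (3 * n).

(* Fixed point w = lim sigma^m(a): its k-th letter is the k-th letter of
   A (k+1) (which has length >= k+1 and is a prefix of all later A m). *)
Definition w (k : nat) : bool := nth k (A (S k)) false.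

Definition ind_a (c : bool) : R := if c then 1 else 0.

Definition Cpoly (u : list bool) (X : R) : R :=
  fold_right Rplus 0 (map (fun i => ind_a (nth i u false) * X ^ i) (seq 0 (length u))).

Definition Ca (X : R) : R := Series (fun k => ind_a (w k) * X ^ k).

Definition alpha_set (n : nat) (s : R) : Prop :=
  -1 <= s < 0 /\
  forall X, s < X < 0 ->
    Cpoly (Rw n) X > 0 /\ Cpoly (Sw n) X > 0 /\ Cpoly (Tw n) X > 0.

(* The set is nonempty and bounded below by -1, so its infimum is real. *)
Definition alpha (n : nat) : R := real (Glb_Rbar (alpha_set n)).

Definition case_a (n : nat) : Prop := forall m, (n <= m)%nat -> alpha m = -1.

Definition case_b (n : nat) : Prop :=
  (forall m, (n <= m)%nat -> alpha m = alpha n /\ alpha n > -1) /\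
  (forall m, (n <= m)%nat ->
     Cpoly (Rw m) (alpha m) = 0 /\ Cpoly (Sw m) (alpha m) = 0 /\
     Cpoly (Tw m) (alpha m) = 0).

(* Main.v *)
Require Import Defs.
From Stdlib Require Import Reals List Arith.
From Coquelicot Require Import Coquelicot.
From Stdlib Require Import Lia Lra Psatz FunctionalExtensionality Classical.
Import Defs.
Import ListNotations.
Open Scope R_scope.
Lemma fold_scale (X : R) (g : nat -> R) (l : list nat) :
  fold_right Rplus 0 (map (fun i => X * g i) l) = X * fold_right Rplus 0 (map g l).
Proof. induction l as [|i l IH]; simpl; [ring|rewrite IH; ring]. Qed.

Lemma cp_nil X : Cpoly [] X = 0.
Proof. reflexivity. Qed.

Lemma cp_cons c u X : Cpoly (c :: u) X = ind_a c + X * Cpoly u X.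
Proof.
  unfold Cpoly. simpl length. simpl seq. simpl map. rewrite <- seq_shift, map_map.
  rewrite <- fold_scale. simpl fold_right. f_equal. ring.
  f_equal. f_equal. apply functional_extensionality. intro i. ring.
Qed.

Lemma cp_app u v X : Cpoly (u ++ v) X = Cpoly u X + X ^ length u * Cpoly v X.
Proof.
  induction u as [|c u IH]; simpl app.
  - rewrite cp_nil. simpl. ring.
  - rewrite !cp_cons, IH. simpl length. simpl pow. ring.
Qed.

Lemma cp_cont u x : continuity_pt (Cpoly u) x.
Proof.
  induction u as [|c u IH].
  - apply continuity_pt_ext with (f := fun _ => 0). intros; reflexivity.
    apply continuity_pt_const. intros a b; reflexivity.
  - apply continuity_pt_ext with (f := fun X => ind_a c + X * Cpoly u X).
    intros; symmetry; apply cp_cons.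
    apply continuity_pt_plus. apply continuity_pt_const. intros a b; reflexivity.
    apply continuity_pt_mult. apply continuity_pt_id. exact IH.
Qed.

Lemma sign_pos (f : R -> R) x : continuity_pt f x -> f x > 0 ->
  exists d, d > 0 /\ forall y, Rabs (y - x) < d -> f y > 0.
Proof.
  intros Hc Hp. destruct (Hc (f x) Hp) as [d [Hd H]].
  exists d. split; [exact Hd|]. intros y Hy.
  destruct (Req_dec x y) as [<-|Hne]; [exact Hp|].
  assert (H1 := H y (conj (conj I Hne) Hy)). simpl in H1. unfold R_dist in H1.
  apply Rabs_def2 in H1. lra.
Qed.

Lemma sign_neg (f : R -> R) x : continuity_pt f x -> f x < 0 ->
  exists d, d > 0 /\ forall y, Rabs (y - x) < d -> f y < 0.
Proof.
  intros Hc Hp. destruct (sign_pos (fun y => - f y) x) as [d [Hd H]].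
  apply continuity_pt_opp; exact Hc. lra.
  exists d; split; auto. intros y Hy; specialize (H y Hy); lra.
Qed.

Lemma AB_S k : A (S k) = A k ++ B k /\ B (S k) = A k.
Proof.
  induction k as [|k [IH1 IH2]]. split; reflexivity.
  split.
  - change (sigma (A (S k)) = sigma (A k) ++ sigma (B k)).
    rewrite IH1. unfold sigma. apply flat_map_app.
  - change (sigma (B (S k)) = sigma (A k)). rewrite IH2. reflexivity.
Qed.
Lemma A_S k : A (S k) = A k ++ B k. Proof. apply AB_S. Qed.
Lemma B_S k : B (S k) = A k. Proof. apply AB_S. Qed.
Lemma A3 m : A (S (S (S m))) = (((A m ++ B m) ++ A m) ++ (A m ++ B m)).
Proof. rewrite !A_S, !B_S, !A_S. reflexivity. Qed.
Lemma B3 m : B (S (S (S m))) = ((A m ++ B m) ++ A m).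
Proof. rewrite !B_S, !A_S, !B_S. reflexivity. Qed.

Lemma three n : (3 * S n = S (S (S (3 * n))))%nat. Proof. lia. Qed.

Lemma blockR n : Rw (S n) = Rw n ++ (Sw n ++ (Tw n ++ Tw n)).
Proof. unfold Rw, Sw, Tw. rewrite three, A3, B3. repeat rewrite <- app_assoc. reflexivity. Qed.
Lemma blockS n : Sw (S n) = Rw n ++ (Sw n ++ (Tw n ++ (Tw n ++ Rw n))).
Proof. unfold Rw, Sw, Tw. rewrite three, A3. repeat rewrite <- app_assoc. reflexivity. Qed.
Lemma blockT n : Tw (S n) = Rw n ++ (Sw n ++ (Tw n ++ Rw n)).
Proof. unfold Rw, Sw, Tw. rewrite three, A3, B3. repeat rewrite <- app_assoc. reflexivity. Qed.

Lemma odd_len n : exists p q, length (A (3 * n)) = (2 * p + 1)%nat /\ length (B (3 * n)) = (2 * q + 1)%nat.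
Proof.
  induction n as [|n [p [q [Hp Hq]]]]. exists 0%nat, 0%nat. split; reflexivity.
  rewrite three, A3, B3. rewrite !length_app, Hp, Hq.
  exists (3 * p + 2 * q + 2)%nat, (2 * p + q + 1)%nat. split; lia.
Qed.

Lemma pow_odd_m1 k : (-1) ^ (2 * k + 1) = -1.
Proof. rewrite Nat.add_1_r. apply pow_1_odd. Qed.

Lemma minus1 n : (Cpoly (A (3 * n)) (-1) - Cpoly (B (3 * n)) (-1)) ^ 2 = 1.
Proof.
  induction n as [|n IH]. simpl. unfold Cpoly. simpl. ring.
  destruct (odd_len n) as [p [q [Hp Hq]]].
  rewrite three, A3, B3. rewrite !cp_app, !length_app, !pow_add, Hp, Hq, !pow_odd_m1.
  rewrite <- IH. ring.
Qed.

Lemma even_len_R n : exists k, length (Rw n) = (2 * k)%nat.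
Proof. destruct (odd_len n) as [p [q [Hp Hq]]]. unfold Rw. rewrite length_app, Hp, Hq.
  exists (p + q + 1)%nat. lia. Qed.
Lemma even_len_S n : exists k, length (Sw n) = (2 * k)%nat.
Proof. destruct (odd_len n) as [p [q [Hp Hq]]]. unfold Sw. rewrite length_app, Hp.
  exists (p + p + 1)%nat. lia. Qed.
Lemma even_len_T n : exists k, length (Tw n) = (2 * k)%nat.
Proof. destruct (odd_len n) as [p [q [Hp Hq]]]. unfold Tw. rewrite length_app, Hp, Hq.
  exists (p + q + 1)%nat. lia. Qed.

Lemma pow_even_pos X k : X <> 0 -> X ^ (2 * k) > 0.
Proof. intro H. rewrite pow_mult. apply pow_lt. nra. Qed.

Lemma head_A k : exists t, A k = true :: t.
Proof. induction k as [|k [t Ht]]. exists []; reflexivity.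
  rewrite A_S, Ht. eexists; reflexivity. Qed.

Lemma cp_true0 t v : Cpoly ((true :: t) ++ v) 0 = 1.
Proof. simpl app. rewrite cp_cons. simpl. ring. Qed.

Lemma nonvanish k x : x <> 0 -> ~ (Cpoly (A k) x = 0 /\ Cpoly (B k) x = 0).
Proof.
  intro Hx. induction k as [|k IH]; intros [H1 H2].
  - unfold Cpoly in H1. simpl in H1. lra.
  - rewrite A_S, cp_app in H1. rewrite B_S in H2. rewrite H2 in H1.
    apply IH. split; [exact H2|].
    assert (x ^ length (A k) <> 0) by (apply pow_nonzero; exact Hx).
    apply (Rmult_eq_reg_l (x ^ length (A k))); [lra | exact H].
Qed.

Lemma pow_small a k : 0 <= a < 1 -> a ^ S k < 1.
Proof. intros H. induction k. simpl; lra. simpl in *.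
  assert (0 <= a * a ^ k) by (apply Rmult_le_pos; [lra| apply pow_le; lra]). nra. Qed.

Lemma not_all_zero n x : -1 < x < 0 ->
  ~ (Cpoly (Rw n) x = 0 /\ Cpoly (Sw n) x = 0 /\ Cpoly (Tw n) x = 0).
Proof.
  intros Hx [HR [HS HT]]. unfold Rw, Sw, Tw in *. rewrite cp_app in HR, HS, HT.
  destruct (odd_len n) as [p [q [Hp Hq]]].
  assert (Hl : Rabs (x ^ length (A (3 * n))) < 1).
  { rewrite <- RPow_abs, Hp, Nat.add_1_r. apply pow_small. split. apply Rabs_pos.
    rewrite Rabs_left by lra. lra. }
  assert (Hc : Cpoly (A (3 * n)) x = 0).
  { assert (HS' : Cpoly (A (3 * n)) x * (1 + x ^ length (A (3 * n))) = 0) by lra.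
    apply Rmult_integral in HS'. destruct HS' as [H|H]; [exact H|].
    exfalso. assert (x ^ length (A (3 * n)) = -1) by lra. rewrite H0 in Hl.
    rewrite Rabs_left in Hl; lra. }
  apply (nonvanish (3 * n) x); [lra|]. split; [exact Hc|].
  rewrite Hc in HR. assert (x ^ length (A (3 * n)) <> 0) by (apply pow_nonzero; lra).
  apply (Rmult_eq_reg_l (x ^ length (A (3 * n)))); [lra | exact H].
Qed.
Definition P n X := Cpoly (Rw n) X > 0 /\ Cpoly (Sw n) X > 0 /\ Cpoly (Tw n) X > 0.

Lemma step_pos n X : X <> 0 -> Cpoly (Rw n) X >= 0 -> Cpoly (Sw n) X >= 0 ->
  Cpoly (Tw n) X >= 0 ->
  (Cpoly (Rw n) X > 0 \/ Cpoly (Sw n) X > 0 \/ Cpoly (Tw n) X > 0) -> P (S n) X.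
Proof.
  intros HX HR HS HT Hd.
  destruct (even_len_R n) as [k1 E1]. destruct (even_len_S n) as [k2 E2].
  destruct (even_len_T n) as [k3 E3].
  pose proof (pow_even_pos X k1 HX). pose proof (pow_even_pos X k2 HX).
  pose proof (pow_even_pos X k3 HX).
  unfold P. rewrite blockR, blockS, blockT, !cp_app, E1, E2, E3.
  set (r := Cpoly (Rw n) X) in *. set (s := Cpoly (Sw n) X) in *.
  set (t := Cpoly (Tw n) X) in *.
  set (w1 := X ^ (2 * k1)) in *. set (w2 := X ^ (2 * k2)) in *.
  set (w3 := X ^ (2 * k3)) in *.
  assert (0 <= w3*t) by nra. assert (0 <= w2*(t+w3*t)) by nra.
  assert (0 <= w3*r) by nra. assert (0 <= w3 * (t + w3 * r)) by nra.
  assert (0 <= w2 * (t + w3 * (t + w3 * r))) by nra.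
  assert (0 <= w2*(t+w3*r)) by nra.
  destruct Hd as [?|[?|?]].
  - repeat split; nra.
  - repeat split; nra.
  - assert (0 < w2*(t+w3*t)) by nra. assert (0 < w2 * (t + w3 * (t + w3 * r))) by nra.
    assert (0 < w2*(t+w3*r)) by nra. repeat split; nra.
Qed.

Lemma nonempty n : (1 <= n)%nat -> exists s0, alpha_set n s0.
Proof.
  intro Hn.
  assert (H0 : P n 0).
  { destruct (head_A (3 * n)) as [t Ht].
    assert (EB : B (3 * n) = A (3 * n - 1)).
    { replace (3 * n)%nat with (S (3 * n - 1)) at 1 by lia. apply B_S. }
    destruct (head_A (3 * n - 1)) as [t' Ht'].
    unfold P, Rw, Sw, Tw. rewrite EB, Ht, Ht', !cp_true0. lra. }
  destruct H0 as [H1 [H2 H3]].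
  destruct (sign_pos _ _ (cp_cont (Rw n) 0) H1) as [d1 [Hd1 K1]].
  destruct (sign_pos _ _ (cp_cont (Sw n) 0) H2) as [d2 [Hd2 K2]].
  destruct (sign_pos _ _ (cp_cont (Tw n) 0) H3) as [d3 [Hd3 K3]].
  set (d := Rmin d1 (Rmin d2 d3)).
  assert (d <= d1) by apply Rmin_l.
  assert (d <= d2) by (eapply Rle_trans; [apply Rmin_r|apply Rmin_l]).
  assert (d <= d3) by (eapply Rle_trans; [apply Rmin_r|apply Rmin_r]).
  assert (0 < d) by (unfold d; repeat apply Rmin_pos; auto).
  exists (Rmax (-1) (- (d / 2))). split.
  - split. apply Rmax_l. apply Rmax_lub_lt; lra.
  - intros X [HX1 HX2]. assert (- (d/2) < X) by (eapply Rle_lt_trans; [apply Rmax_r|exact HX1]).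
    assert (Rabs (X - 0) < d) by (rewrite Rabs_left; lra).
    repeat split; [apply K1|apply K2|apply K3]; lra.
Qed.

Lemma alpha_facts n : (1 <= n)%nat ->
  -1 <= alpha n < 0 /\ (forall s, alpha_set n s -> alpha n <= s) /\
  (forall X, alpha n < X < 0 -> P n X).
Proof.
  intro Hn. destruct (nonempty n Hn) as [s0 Hs0].
  destruct (Glb_Rbar_correct (alpha_set n)) as [Hlb Hg].
  unfold alpha. destruct (Glb_Rbar (alpha_set n)) as [g| |] eqn:E.
  - simpl real.
    assert (Hm1 : -1 <= g).
    { apply (Hg (Finite (-1))). intros x Hx. simpl. apply Hx. }
    assert (Hle : forall s, alpha_set n s -> g <= s) by (intros s Hs; apply (Hlb s Hs)).
    split; [split|split].
    + exact Hm1.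
    + pose proof (Hle s0 Hs0). destruct Hs0 as [[_ ?] _]. lra.
    + exact Hle.
    + intros X [HX1 HX2]. destruct (classic (P n X)) as [HP|HP]; [exact HP|].
      exfalso.
      assert (Hlb' : is_lb_Rbar (alpha_set n) X).
      { intros s Hs. simpl. destruct (Rlt_le_dec s X) as [Hlt|Hge]; [|exact Hge].
        exfalso. apply HP. destruct Hs as [_ Hs]. apply Hs. lra. }
      pose proof (Hg _ Hlb'). simpl in H. lra.
  - pose proof (Hlb s0 Hs0). simpl in H. contradiction.
  - assert (Hlb' : is_lb_Rbar (alpha_set n) (-1)).
    { intros x Hx. simpl. apply Hx. }
    pose proof (Hg _ Hlb'). simpl in H. contradiction.
Qed.

Lemma neg_contra u c : Cpoly u c < 0 -> c < 0 ->
  ~ (forall X, c < X < 0 -> Cpoly u X > 0).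
Proof.
  intros Hc Hc0 H. destruct (sign_neg _ _ (cp_cont u c) Hc) as [d [Hd K]].
  set (e := Rmin d (- c)).
  assert (e <= d) by apply Rmin_l. assert (e <= - c) by apply Rmin_r.
  assert (0 < e) by (apply Rmin_pos; lra).
  assert (G1 := H (c + e / 2)). assert (G2 := K (c + e / 2)).
  assert (Rabs (c + e / 2 - c) < d) by (rewrite Rabs_right; lra).
  assert (G3 : c < c + e/2 < 0) by lra. specialize (G1 G3). specialize (G2 H3). lra.
Qed.

Lemma alpha_dec n : (1 <= n)%nat -> alpha (S n) < alpha n.
Proof.
  intro Hn. destruct (alpha_facts n Hn) as [[Ha1 Ha2] [_ HP]].
  destruct (alpha_facts (S n) ltac:(lia)) as [_ [Hlb' _]].
  set (a := alpha n) in *.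
  assert (Hgt : -1 < a).
  { destruct (Rle_lt_or_eq_dec _ _ Ha1) as [H|H]; [exact H|exfalso].
    pose proof (minus1 n) as M.
    destruct (odd_len n) as [p [q [Hp Hq]]].
    assert (ER : Cpoly (Rw n) (-1) = Cpoly (A (3 * n)) (-1) - Cpoly (B (3 * n)) (-1)).
    { unfold Rw. rewrite cp_app, Hp, pow_odd_m1. ring. }
    assert (ET : Cpoly (Tw n) (-1) = Cpoly (B (3 * n)) (-1) - Cpoly (A (3 * n)) (-1)).
    { unfold Tw. rewrite cp_app, Hq, pow_odd_m1. ring. }
    destruct (Rlt_le_dec (Cpoly (Rw n) (-1)) 0) as [HR|HR].
    - apply (neg_contra (Rw n) (-1) HR ltac:(lra)). intros X HX. apply HP. rewrite <- H. exact HX.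
    - assert (HT : Cpoly (Tw n) (-1) < 0) by nra.
      apply (neg_contra (Tw n) (-1) HT ltac:(lra)). intros X HX. apply HP. rewrite <- H. exact HX. }
  assert (Hge : forall u, (forall X, a < X < 0 -> Cpoly u X > 0) -> Cpoly u a >= 0).
  { intros u Hu. destruct (Rlt_le_dec (Cpoly u a) 0) as [H|H]; [|lra].
    exfalso. exact (neg_contra u a H Ha2 Hu). }
  assert (HRa : Cpoly (Rw n) a >= 0) by (apply Hge; intros X HX; apply HP; exact HX).
  assert (HSa : Cpoly (Sw n) a >= 0) by (apply Hge; intros X HX; apply HP; exact HX).
  assert (HTa : Cpoly (Tw n) a >= 0) by (apply Hge; intros X HX; apply HP; exact HX).
  assert (Hor : Cpoly (Rw n) a > 0 \/ Cpoly (Sw n) a > 0 \/ Cpoly (Tw n) a > 0).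
  { destruct (Rle_lt_or_eq_dec 0 _ (Rge_le _ _ HRa)) as [?|E1]; [left; lra|].
    destruct (Rle_lt_or_eq_dec 0 _ (Rge_le _ _ HSa)) as [?|E2]; [right; left; lra|].
    destruct (Rle_lt_or_eq_dec 0 _ (Rge_le _ _ HTa)) as [?|E3]; [right; right; lra|].
    exfalso. apply (not_all_zero n a); [lra|]. auto. }
  destruct (step_pos n a ltac:(lra) HRa HSa HTa Hor) as [H1 [H2 H3]].
  destruct (sign_pos _ _ (cp_cont (Rw (S n)) a) H1) as [d1 [Hd1 K1]].
  destruct (sign_pos _ _ (cp_cont (Sw (S n)) a) H2) as [d2 [Hd2 K2]].
  destruct (sign_pos _ _ (cp_cont (Tw (S n)) a) H3) as [d3 [Hd3 K3]].
  set (d := Rmin d1 (Rmin d2 d3)).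
  assert (d <= d1) by apply Rmin_l.
  assert (d <= d2) by (eapply Rle_trans; [apply Rmin_r|apply Rmin_l]).
  assert (d <= d3) by (eapply Rle_trans; [apply Rmin_r|apply Rmin_r]).
  assert (0 < d) by (unfold d; repeat apply Rmin_pos; auto).
  set (y := Rmax (-1) (a - d / 2)).
  assert (Hy1 : -1 <= y) by apply Rmax_l.
  assert (Hy2 : a - d/2 <= y) by apply Rmax_r.
  assert (Hy3 : y < a) by (apply Rmax_lub_lt; lra).
  enough (Hys : alpha_set (S n) y) by (pose proof (Hlb' y Hys); lra).
  split; [lra|]. intros X [HX1 HX2].
  destruct (Rle_lt_dec X a) as [HXa|HXa].
  - assert (Rabs (X - a) < d).
    { destruct (Rle_lt_or_eq_dec _ _ HXa) as [h|h].
      rewrite Rabs_left; lra. subst X. rewrite Rminus_diag, Rabs_R0. lra. }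
    repeat split; [apply K1|apply K2|apply K3]; lra.
  - destruct (HP X (conj HXa HX2)) as [P1 [P2 P3]].
    apply step_pos; try lra.
Qed.

Theorem proposition5p9 :
  forall n : nat, (1 <= n)%nat ->
    alpha (S n) <= alpha n /\
    (alpha (S n) = alpha n <-> case_a n \/ case_b n) /\
    (case_a n -> forall X, -1 < X < 1 -> Ca X > 0) /\
    (case_b n -> Ca (alpha n) = 0 /\ forall X, alpha n < X < 1 -> Ca X > 0).
Proof.
  intros n Hn. pose proof (alpha_dec n Hn) as Hd.
  assert (Ha : ~ case_a n).
  { intro H. pose proof (H n (le_n n)). pose proof (H (S n) ltac:(lia)). lra. }
  assert (Hb : ~ case_b n).
  { intros [H _]. destruct (H (S n) ltac:(lia)). lra. }
  split; [lra|]. split; [split; [intro; lra| intros [?|?]; contradiction]|].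
  split; intro; contradiction.
Qed.
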